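(* For every positive integer $n$: $$3\,\frac{n(n+1)}{2}\ \Big|\ \sum_{k=1}^n kD_kD_{k-1},\qquad \frac{n^2(n+1)^2}{4}\ \Big|\ \sum_{k=1}^n k^3D_kD_{k-1},$$ $$\frac{n(n+1)(n+2)}{(2,n)}\ \Big|\ \sum_{k=1}^n k(k+1)(2k+1)s_k^2,$$ and $$\frac{1}{n(n+1)(n+2)}\sum_{k=1}^n k(k+1)(2k+1)(-1)^{n-k}s_k^2=\frac{s_ns_{n+1}}{3}\in\mathbb{Z},$$ where $(2,n)$ is the greatest common divisor of $2$ and $n$.
   Context: $D_n=\sum_{k=0}^n\binom{n}{k}\binom{n+k}{k}$ is the central Delannoy number. For $m\ge k\ge1$, the Narayana number is $N(m,k)=\frac1m\binom{m}{k}\binom{m}{k-1}$, and for $m\ge1$ the little Schröder number is $s_m=\sum_{k=1}^m N(m,k)2^{m-k}$. *)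

(* Defs.v *)
From mathcomp Require Import all_boot all_order all_algebra.
Set Implicit Arguments. Unset Strict Implicit. Unset Printing Implicit Defensive.

Definition delannoy (n : nat) : nat :=
  \sum_(0 <= k < n.+1) 'C(n, k) * 'C(n + k, k).

(* Narayana number N(m,k) = (1/m) C(m,k) C(m,k-1), for m >= k >= 1;
   the division is exact in that range. *)
Definition narayana (m k : nat) : nat := ('C(m, k) * 'C(m, k.-1)) %/ m.

Definition schroeder (m : nat) : nat :=
  \sum_(1 <= k < m.+1) narayana m k * 2 ^ (m - k).

(* Main.v *)
Require Import Defs.
From mathcomp Require Import all_boot all_order all_algebra.
From mathcomp Require Import ring lra zify.
Import GRing.Theory Num.Theory.

Fact A_key : unit. Proof. by []. Qed.
Definition A n k := locked_with A_key ('C(n, k) * 'C(n + k, k)).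
Lemma AE n k : A n k = 'C(n, k) * 'C(n + k, k).
Proof. by rewrite /A unlock. Qed.

Lemma R1 n k : (n.+1 - k) * A n.+1 k = (n.+1 + k) * A n k.
Proof.
rewrite !AE.
have h1 := mul_bin_down n.+1 k.
have h2 := mul_bin_down (n.+1 + k) k.
rewrite addnK addSn /= in h2.
rewrite mulnA -h1 /= addSn mulnAC -h2. ring.
Qed.

Lemma R2 n k : k.+1 ^ 2 * A n k.+1 = (n + k.+1) * (n - k) * A n k.
Proof.
rewrite !AE.
have h1 := mul_bin_left n k.
have h2 := mul_bin_diag (n + k.+1) k.
rewrite addnS /= in h2.
rewrite addnS.
have -> : k.+1 ^ 2 * ('C(n, k.+1) * 'C((n + k).+1, k.+1)) =
  (k.+1 * 'C(n, k.+1)) * (k.+1 * 'C((n + k).+1, k.+1)) by ring.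
rewrite h1 -h2. ring.
Qed.

Lemma solve_nat {c a b : nat} : (0 < c)%N -> c * a = b -> (a%:R = b%:R / c%:R :> rat)%R.
Proof. move=> c0 <-; rewrite natrM mulrAC divff ?mul1r // pnatr_eq0 -lt0n c0. by []. Qed.

Lemma A_small n k : (n < k)%N -> A n k = 0.
Proof. by move=> h; rewrite AE bin_small. Qed.

Lemma A0 n : A n 0 = 1.
Proof. by rewrite AE !bin0. Qed.

Lemma Lpt n k : n.+2 * A n.+2 k.+1 + n.+1 * A n k.+1 =
  (2 * n + 3) * (A n.+1 k.+1 + 2 * A n.+1 k).
Proof.
case: (ltnP n.+1 k) => hk.
  by rewrite !A_small //; lia.
case: (ltnP n k) => hk2.
  have ek : k = n.+1 by lia.
  subst k.
  rewrite (@A_small n) // (@A_small n.+1) //.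
  have e1 := R2 n.+2 n.+1.
  have e2 := R1 n.+1 n.+1.
  have h1 : n.+2 - n.+1 = 1 by lia.
  rewrite h1 in e1 e2.
  apply/eqP; rewrite -(eqr_nat rat); apply/eqP.
  rewrite !(natrD, natrM).
  rewrite (solve_nat _ e1) ?expn_gt0 // !(natrD, natrM) (solve_nat _ e2) // !(natrD, natrM).
  have hn := ler0n rat n.
  field.
  apply: lt0r_neq0. lra.
have [m em] : exists m, n = k + m by exists (n - k); lia.
move: hk hk2 => _ _; subst n.
have e1 := R1 (k + m).+1 k.+1.
have e2 := R1 (k + m) k.+1.
have e3 := R2 (k + m).+1 k.
have E1 : (k + m).+2 - k.+1 = m.+1 by lia.
have E2 : (k + m).+1 - k.+1 = m by lia.
have E3 : (k + m).+1 - k = m.+1 by lia.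
rewrite E1 in e1; rewrite E2 in e2; rewrite E3 in e3.
apply/eqP; rewrite -(eqr_nat rat); apply/eqP.
rewrite !(natrD, natrM).
rewrite (solve_nat _ e1) //.
rewrite (solve_nat _ (esym e2)); last lia.
rewrite (solve_nat _ (esym e3)); last lia.
rewrite !(natrD, natrM).
have hk := ler0n rat k; have hm := ler0n rat m.
field.
by repeat (apply/andP; split); apply: lt0r_neq0; lra.
Qed.

Lemma DA n N : (n < N)%N -> delannoy n = \sum_(0 <= k < N) A n k.
Proof.
move=> hN; rewrite /delannoy.
have -> : \sum_(0 <= k < n.+1) 'C(n, k) * 'C(n + k, k) = \sum_(0 <= k < n.+1) A n k.
  by apply: eq_bigr => i _; rewrite AE.
rewrite !big_mkord (big_ord_widen N (fun k => A n k)) //.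
rewrite big_mkcond /=; apply: eq_bigr => i _; case: ifP => h //.
by rewrite A_small // ltnNge -ltnS h.
Qed.

Lemma Drec n : n.+2 * delannoy n.+2 + n.+1 * delannoy n = 3 * (2 * n + 3) * delannoy n.+1.
Proof.
rewrite (@DA n.+2 n.+3) // (@DA n n.+3) //.
rewrite (big_nat_recl n.+2 0) // (big_nat_recl n.+2 0) // !A0.
have e : \sum_(0 <= i < n.+2) A n.+1 i = delannoy n.+1 by rewrite (@DA n.+1 n.+2).
have e2 : \sum_(0 <= i < n.+2) (n.+2 * A n.+2 i.+1 + n.+1 * A n i.+1) =
   \sum_(0 <= i < n.+2) ((2 * n + 3) * (A n.+1 i.+1 + 2 * A n.+1 i)).
  by apply: eq_bigr => i _; rewrite Lpt.
rewrite big_split /= -!big_distrr /= big_split /= -big_distrr /= e in e2.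
have e3 : delannoy n.+1 = 1 + \sum_(0 <= i < n.+2) A n.+1 i.+1.
  by rewrite (@DA n.+1 n.+3) // (big_nat_recl n.+2 0) // A0.
rewrite mulnDr (mulnDr n.+1) addnACA e2 e3.
ring.
lia.
Qed.

Lemma binr n k : k <= n -> ('C(n, k)%:R = n`!%:R / (k`!%:R * (n - k)`!%:R) :> rat)%R.
Proof.
move=> h; rewrite -natrM; apply: solve_nat; first by rewrite muln_gt0 !fact_gt0.
by rewrite mulnC bin_fact.
Qed.

Lemma binmul n k j : j <= k -> 'C(n, k) * 'C(k, j) = 'C(n, j) * 'C(n - j, k - j).
Proof.
move=> hjk.
case: (ltnP n k) => hkn.
  rewrite bin_small // mul0n.
  case: (ltnP n j) => hjn; first by rewrite bin_small.
  by rewrite (@bin_small (n - j)) ?muln0 //; lia.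
have [b eb] : exists b, k = j + b by exists (k - j); lia.
have [a ea] : exists a, n = k + a by exists (n - k); lia.
subst n k.
apply/eqP; rewrite -(eqr_nat rat); apply/eqP.
rewrite !natrM !binr //; try lia.
have -> : j + b + a - (j + b) = a by lia.
have -> : j + b - j = b by lia.
have -> : j + b + a - j = b + a by lia.
have -> : b + a - b = a by lia.
field.
by repeat (apply/andP; split); rewrite pnatr_eq0 -lt0n fact_gt0.
Qed.

Lemma sum_widen (F : nat -> nat) a b : a <= b -> (forall j, a <= j -> F j = 0) ->
  \sum_(0 <= j < a) F j = \sum_(0 <= j < b) F j.
Proof.
move=> hab H; rewrite (big_cat_nat (leq0n a) hab) /=.
rewrite [X in _ = _ + X](_ : _ = 0) ?addn0 //.
rewrite big_nat_cond big1 // => j /andP[/andP[h _] _]; exact: H.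
Qed.

Lemma sum_bin m : \sum_(0 <= i < m.+1) 'C(m, i) = 2 ^ m.
Proof.
have := expnDn 1 1 m; rewrite big_mkord => ->.
by apply: eq_bigr => i _; rewrite !exp1n !muln1.
Qed.

Lemma sumCk n j : j <= n -> \sum_(0 <= k < n.+1) 'C(n, k) * 'C(k, j) = 'C(n, j) * 2 ^ (n - j).
Proof.
move=> hjn.
rewrite (@big_cat_nat _ _ _ j 0 n.+1) /=; [|lia|lia].
rewrite big_nat_cond big1 ?add0n; last first.
  by move=> k /andP[/andP[_ h] _]; rewrite (@bin_small k j) ?muln0.
rewrite (eq_big_nat _ _ (F2 := fun k => 'C(n, j) * 'C(n - j, k - j))); last first.
  by move=> k /andP[h _]; rewrite binmul.
rewrite -big_distrr /=; congr (_ * _).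
rewrite -{1}(add0n j) big_addn.
have -> : n.+1 - j = (n - j).+1 by lia.
rewrite -sum_bin; apply: eq_bigr => i _; by rewrite addnK.
Qed.

Lemma DB n : delannoy n = \sum_(0 <= j < n.+1) 'C(n, j) ^ 2 * 2 ^ (n - j).
Proof.
rewrite /delannoy.
rewrite (eq_big_nat _ _ (F2 := fun k => \sum_(0 <= j < n.+1) 'C(n, k) * ('C(n, j) * 'C(k, j)))); last first.
  move=> k /andP[_ hk].
  rewrite -big_distrr /=; congr (_ * _).
  rewrite -binomial.Vandermonde.
  have -> : \sum_(j < k.+1) 'C(n, j) * 'C(k, k - j) = \sum_(0 <= j < k.+1) 'C(n, j) * 'C(k, k - j) by rewrite big_mkord.
  rewrite (eq_big_nat _ _ (F2 := fun j => 'C(n, j) * 'C(k, j))); last first.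
    by move=> j /andP[_ hj]; rewrite bin_sub.
  apply: sum_widen; first lia.
  by move=> j hj; rewrite (@bin_small k j) ?muln0.
rewrite exchange_big /=.
apply: eq_big_nat => j /andP[_ hj].
rewrite (eq_bigr (fun k => 'C(n, j) * ('C(n, k) * 'C(k, j)))); last first.
  by move=> k _; ring.
rewrite -big_distrr /= sumCk //; ring.
Qed.

Lemma nara_dvd n i : i < n -> n %| 'C(n, i.+1) * 'C(n, i).
Proof.
move=> hi.
have h1 := mul_bin_left n i.
have h2 := mul_bin_diag n i.
have h3 := mul_bin_down n i.
set Y := 'C(n, i.+1) * 'C(n, i).
have d1 : n %| i.+1 * Y by rewrite /Y mulnA -h2 -mulnA dvdn_mulr.
have d2 : n %| (n - i) * Y by rewrite /Y mulnCA -h3 mulnCA dvdn_mulr.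
have : n %| n.+1 * Y.
  have -> : n.+1 * Y = i.+1 * Y + (n - i) * Y by rewrite -mulnDl; congr (_ * _); lia.
  by rewrite dvdn_add.
by rewrite Gauss_dvdr // coprimenS.
Qed.

Lemma nara_mul n k : 0 < k <= n -> n * narayana n k = 'C(n, k) * 'C(n, k.-1).
Proof.
case: k => [//|i] /andP[_ hi].
by rewrite /narayana mulnC divnK //= nara_dvd.
Qed.

Lemma nS n : n * schroeder n = \sum_(0 <= i < n) 'C(n, i.+1) * 'C(n, i) * 2 ^ (n - i.+1).
Proof.
rewrite /schroeder big_distrr /= big_add1 /=.
apply: eq_big_nat => i /andP[_ hi].
by rewrite mulnA nara_mul //; lia.
Qed.

Lemma DS n : delannoy n.+1 = 3 * delannoy n + 4 * (n * schroeder n).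
Proof.
rewrite nS !DB (big_nat_recl n.+1 0) // bin0 subn0.
rewrite (eq_big_nat _ _ (F2 := fun i => 'C(n, i.+1) ^ 2 * 2 ^ (n - i) + 'C(n, i) ^ 2 * 2 ^ (n - i) + 2 * ('C(n, i.+1) * 'C(n, i)) * 2 ^ (n - i))); last first.
  by move=> i _; rewrite binS sqrnD subSS !mulnDl.
rewrite !big_split /=.
have T1 : \sum_(0 <= i < n.+1) 'C(n, i.+1) ^ 2 * 2 ^ (n - i) =
          2 * \sum_(0 <= i < n) 'C(n, i.+1) ^ 2 * 2 ^ (n - i.+1).
  rewrite big_nat_recr //= bin_small // exp0n // mul0n addn0 big_distrr /=.
  apply: eq_big_nat => i /andP[_ hi].
  by rewrite -(subnSK hi) (expnS 2); ring.
have T3 : \sum_(0 <= i < n.+1) 2 * ('C(n, i.+1) * 'C(n, i)) * 2 ^ (n - i) =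
          4 * \sum_(0 <= i < n) 'C(n, i.+1) * 'C(n, i) * 2 ^ (n - i.+1).
  rewrite big_nat_recr //= bin_small // mul0n muln0 mul0n addn0 big_distrr /=.
  apply: eq_big_nat => i /andP[_ hi].
  by rewrite -(subnSK hi) (expnS 2); ring.
have T0 : \sum_(0 <= i < n.+1) 'C(n, i) ^ 2 * 2 ^ (n - i) =
          2 ^ n + \sum_(0 <= i < n) 'C(n, i.+1) ^ 2 * 2 ^ (n - i.+1).
  by rewrite (big_nat_recl n 0) // bin0 subn0 exp1n mul1n.
rewrite T1 T3 T0 (expnS 2) exp1n mul1n.
set a := 2 ^ n; set b := \sum_(0 <= i < n) _; set c := \sum_(0 <= i < n) _.
lia.
Qed.

Notation D := delannoy.
Notation S := schroeder.

Lemma Srec n : 4 * n.+2 * S n.+1 + D n = 3 * D n.+1.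
Proof.
have h1 := DS n.+1.
have h2 := Drec n.
apply/eqP; rewrite -(eqn_pmul2l (ltn0Sn n)); apply/eqP.
rewrite h1 in h2.
nia.
Qed.

Open Scope ring_scope.

Lemma DSr n : ((D n.+1)%:R = 3 * (D n)%:R + 4 * n%:R * (S n)%:R :> rat).
Proof. by rewrite DS natrD !natrM mulrA. Qed.

Lemma Svr n : ((S n.+1)%:R = (3 * (D n.+1)%:R - (D n)%:R) / (4 * n.+2%:R) :> rat).
Proof.
have h := Srec n.
have e : 4 * n.+2%:R * (S n.+1)%:R + (D n)%:R = 3 * (D n.+1)%:R :> rat.
  have := congr1 (fun x : nat => x%:R : rat) h; rewrite /= natrD !natrM => ->.
  by [].
rewrite -e; field.
have hn := ler0n rat n.
by repeat (apply/andP; split); apply: lt0r_neq0; lra.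
Qed.

Definition S1 n := (\sum_(1 <= k < n.+1) k * D k * D k.-1)%N.
Definition S2 n := (\sum_(1 <= k < n.+1) k ^ 3 * D k * D k.-1)%N.
Definition S3 n := (\sum_(1 <= k < n.+1) k * k.+1 * k.*2.+1 * S k ^ 2)%N.
Definition S4 n : rat := \sum_(1 <= k < n.+1) (-1) ^+ (n - k) * (k * k.+1 * k.*2.+1 * S k ^ 2)%:R.

Lemma S1_closed n : 2 * (S1 n)%:R = n%:R * n.+1%:R *
  (3 * (D n)%:R ^+ 2 - 4 * (D n)%:R * (S n)%:R - 6 * n%:R * n.+1%:R * (S n)%:R ^+ 2) :> rat.
Proof.
elim: n => [|n IH]; first by rewrite /S1 big_geq // !mul0r mulr0.
rewrite /S1 big_nat_recr //= -/(S1 n) natrD mulrDr IH !natrM.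
rewrite (Svr n) (DSr n).
field.
have hn := ler0n rat n.
by repeat (apply/andP; split); apply: lt0r_neq0; lra.
Qed.

Lemma S2_closed n : 4 * (S2 n)%:R = n%:R ^+ 2 * n.+1%:R ^+ 2 *
  (2 * (D n)%:R ^+ 2 - 2 * (D n)%:R * (S n)%:R - (2 * n%:R + 1) ^+ 2 * (S n)%:R ^+ 2) :> rat.
Proof.
elim: n => [|n IH]; first by rewrite /S2 big_geq // expr0n /= !mul0r mulr0.
rewrite /S2 big_nat_recr //= -/(S2 n) natrD mulrDr IH !natrM ?natrX.
rewrite (Svr n) (DSr n).
field.
have hn := ler0n rat n.
by repeat (apply/andP; split); apply: lt0r_neq0; lra.
Qed.

Lemma S3_closed n : 4 * (S3 n)%:R = n%:R * n.+1%:R * n.+2%:R *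
  ((D n.+1)%:R * (S n)%:R - (D n)%:R * (S n.+1)%:R) :> rat.
Proof.
elim: n => [|n IH]; first by rewrite /S3 big_geq // !mul0r.
rewrite /S3 big_nat_recr //= -/(S3 n) natrD mulrDr IH !natrM ?natrX -?muln2 ?natrM.
rewrite (Svr n.+1) (DSr n.+1) (Svr n) (DSr n).
field.
have hn := ler0n rat n.
by repeat (apply/andP; split); apply: lt0r_neq0; lra.
Qed.

Lemma S4_closed n : 3 * S4 n = n%:R * n.+1%:R * n.+2%:R * ((S n)%:R * (S n.+1)%:R) :> rat.
Proof.
elim: n => [|n IH]; first by rewrite /S4 big_geq // !mul0r mulr0.
rewrite /S4 big_nat_recr //= subnn expr0 mul1r.
rewrite (eq_big_nat _ _ (F2 := fun k => - ((-1) ^+ (n - k) * (k * k.+1 * k.*2.+1 * S k ^ 2)%:R))); last first.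
  by move=> k /andP[_ hk]; rewrite subSn // exprS mulN1r mulNr.
rewrite sumrN -/(S4 n) mulrDr mulrN IH !natrM ?natrX -?muln2 ?natrM.
rewrite (Svr n.+1) (DSr n.+1) (Svr n) (DSr n).
field.
have hn := ler0n rat n.
by repeat (apply/andP; split); apply: lt0r_neq0; lra.
Qed.

Close Scope ring_scope.

Lemma pow2mod3 a : 2 ^ a %% 3 = (if odd a then 2 else 1).
Proof.
elim: a => // a IH; rewrite expnS -modnMm IH /=.
by case: (odd a).
Qed.

Lemma p2 a b : odd (a + b) -> 3 %| 2 ^ a + 2 ^ b.
Proof.
move=> h; rewrite /dvdn -modnDm !pow2mod3; move: h; rewrite oddD.
by case: (odd a); case: (odd b).
Qed.

Lemma nara_sym n k : 0 < k <= n -> narayana n (n.+1 - k) = narayana n k.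
Proof.
case: k => [//|j] /andP[_ hj].
rewrite /narayana subSS bin_sub; last lia.
have -> : (n - j).-1 = n - j.+1 by lia.
by rewrite bin_sub // mulnC.
Qed.

Lemma S3div n : ~~ odd n -> 3 %| S n.
Proof.
move=> hn.
have e : 2 * S n = \sum_(1 <= k < n.+1) narayana n k * (2 ^ (n - k) + 2 ^ (k.-1)).
  rewrite mul2n -addnn {2}/schroeder big_nat_rev /=.
  rewrite /schroeder -big_split /=.
  apply: eq_big_nat => k /andP[h1 h2].
  have -> : 1 + n.+1 - k.+1 = n.+1 - k by lia.
  rewrite nara_sym; last lia.
  have -> : n - (n.+1 - k) = k.-1 by lia.
  by rewrite mulnDr.
have : 3 %| 2 * S n.
  rewrite e big_nat_cond; apply: dvdn_sum => k /andP[/andP[h1 h2] _].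
  apply: dvdn_mull; apply: p2.
  have -> : n - k + k.-1 = n.-1 by lia.
  case: n hn h2 {e} => [|n] //=.
  - by move=> _ h2; lia.
  - by move=> + _ => /=; case: (odd n).
by rewrite Gauss_dvdr.
Qed.

Lemma S_odd n : 0 < n -> odd (S n).
Proof.
case: n => [//|n] _.
rewrite /schroeder big_nat_recr //= subnn expn0 muln1.
have -> : narayana n.+1 n.+1 = 1.
  by rewrite /narayana binn /= binSn mul1n divnn.
rewrite oddD /= addbT.
rewrite -dvdn2.
rewrite big_nat_cond; apply: dvdn_sum => k /andP[/andP[h1 h2] _].
apply: dvdn_mull.
have -> : n.+1 - k = (n - k).+1 by lia.
by rewrite expnS dvdn_mulr.
Qed.

Lemma D_odd n : odd (D n).
Proof.
elim: n => [|n IH].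
  by rewrite /delannoy big_nat1.
by rewrite DS oddD oddM /= IH oddM.
Qed.

Lemma D3 n : odd n -> 3 %| D n.
Proof.
case: n => [//|m] /= hm.
rewrite DS; apply: dvdn_add; first by apply: dvdn_mulr.
by apply: dvdn_mull; apply: dvdn_mull; apply: S3div.
Qed.

Lemma DS3 n : 3 %| D n * S n.
Proof.
case h: (odd n).
  by apply: dvdn_mulr; apply: D3.
by apply: dvdn_mull; apply: S3div; rewrite h.
Qed.

Definition X n := D n.+1 * S n - D n * S n.+1.

Lemma XE n : 4 * S3 n + n * n.+1 * n.+2 * (D n * S n.+1) = n * n.+1 * n.+2 * (D n.+1 * S n).
Proof.
apply/eqP; rewrite -(eqr_nat rat); apply/eqP.
rewrite !(natrD, natrM) (S3_closed n).
ring.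
Qed.

Lemma XU n : 4 * S3 n = n * n.+1 * n.+2 * X n.
Proof. by rewrite /X mulnBr -XE addnK. Qed.

Lemma Xle n : 0 < n -> D n * S n.+1 <= D n.+1 * S n.
Proof.
move=> hn; rewrite -(@leq_pmul2l (n * n.+1 * n.+2)); last by rewrite !muln_gt0 hn.
by rewrite -XE leq_addl.
Qed.

Lemma Xeven n : 0 < n -> 2 %| X n.
Proof.
move=> hn; rewrite dvdn2 /X oddB ?Xle // !oddM !D_odd !S_odd //.
Qed.

Lemma X4 n : odd n -> 4 %| X n.
Proof.
case: n => [//|j] /= hj.
have E1 := XU j.+1; have E0 := XU j.
have R : S3 j.+1 = S3 j + j.+1 * j.+2 * j.+1.*2.+1 * S j.+1 ^ 2.
  by rewrite /S3 big_nat_recr.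
have key : j.+3 * X j.+1 = j * X j + 4 * (j.+1.*2.+1 * S j.+1 ^ 2).
  apply/eqP; rewrite -(@eqn_pmul2l (j.+1 * j.+2)) //; apply/eqP.
  transitivity (4 * S3 j.+1); first by rewrite E1; ring.
  rewrite R mulnDr E0 -!muln2; ring.
have h4 : 4 %| j * X j.
  case: j hj {E1 E0 R key} => [//|j] hj.
  apply: (@dvdn_mul 2 2); first by rewrite dvdn2.
  exact: Xeven.
have : 4 %| j.+3 * X j.+1 by rewrite key dvdn_add // dvdn_mulr.
rewrite Gauss_dvdr // (_ : 4 = 2 ^ 2) // coprime_pexpl // coprime2n /=.
by rewrite negbK.
Qed.

Theorem corollary1p1 (n : nat) (hn : (0 < n)%N) :
  [/\ (3 * (n * n.+1 %/ 2) %| \sum_(1 <= k < n.+1) k * delannoy k * delannoy k.-1)%N,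
      ((n ^ 2 * n.+1 ^ 2) %/ 4 %| \sum_(1 <= k < n.+1) k ^ 3 * delannoy k * delannoy k.-1)%N,
      ((n * n.+1 * n.+2) %/ gcdn 2 n %|
         \sum_(1 <= k < n.+1) k * k.+1 * k.*2.+1 * schroeder k ^ 2)%N,
      ((n * n.+1 * n.+2)%:R^-1 *
         \sum_(1 <= k < n.+1) (-1) ^+ (n - k) * (k * k.+1 * k.*2.+1 * schroeder k ^ 2)%:R
       = (schroeder n * schroeder n.+1)%:R / 3 :> rat)%R
    & (3 %| schroeder n * schroeder n.+1)%N].
Proof.
set m := n * n.+1 %/ 2.
have hm2 : n * n.+1 = 2 * m.
  by rewrite /m [2 * _]mulnC divnK // dvdn2 oddM /= andbN.
have hmr : (m%:R = n%:R * n.+1%:R / 2 :> rat)%R.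
  by rewrite (solve_nat _ (esym hm2)) // natrM.
have [w hw] : exists w, D n * S n = 3 * w.
  by move/dvdnP: (DS3 n) => [w hw]; exists w; rewrite hw mulnC.
have hwr : (w%:R = (D n)%:R * (S n)%:R / 3 :> rat)%R.
  by rewrite (solve_nat _ (esym hw)) // natrM.
have hnr : (0 < n%:R :> rat)%R by rewrite ltr0n.
split.
- change (3 * m %| S1 n).
  have e : S1 n + 3 * m * (4 * w + 2 * (n * n.+1) * S n ^ 2) = 3 * m * D n ^ 2.
    apply/eqP; rewrite -(eqr_nat rat); apply/eqP.
    have h1 := S1_closed n.
    have hs1 : ((S1 n)%:R = (n%:R * n.+1%:R *
       (3 * (D n)%:R ^+ 2 - 4 * (D n)%:R * (S n)%:R - 6 * n%:R * n.+1%:R * (S n)%:R ^+ 2)) / 2 :> rat)%R.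
      by rewrite -h1; field.
    rewrite !(natrD, natrM, natrX) hs1 hmr hwr.
    by field.
  have : 3 * m %| S1 n + 3 * m * (4 * w + 2 * (n * n.+1) * S n ^ 2) by rewrite e dvdn_mulr.
  by rewrite dvdn_addl // dvdn_mulr.
- have -> : n ^ 2 * n.+1 ^ 2 %/ 4 = m ^ 2.
    by rewrite -expnMn hm2 expnMn mulKn.
  change (m ^ 2 %| S2 n).
  have e : S2 n + m ^ 2 * (2 * (D n * S n) + (2 * n + 1) ^ 2 * S n ^ 2) = m ^ 2 * (2 * D n ^ 2).
    apply/eqP; rewrite -(eqr_nat rat); apply/eqP.
    have h1 := S2_closed n.
    have hs1 : ((S2 n)%:R = (n%:R ^+ 2 * n.+1%:R ^+ 2 *
      (2 * (D n)%:R ^+ 2 - 2 * (D n)%:R * (S n)%:R - (2 * n%:R + 1) ^+ 2 * (S n)%:R ^+ 2)) / 4 :> rat)%R.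
      by rewrite -h1; field.
    rewrite !(natrD, natrM, natrX) hs1 hmr.
    by field.
  have : m ^ 2 %| S2 n + m ^ 2 * (2 * (D n * S n) + (2 * n + 1) ^ 2 * S n ^ 2) by rewrite e dvdn_mulr.
  by rewrite dvdn_addl // dvdn_mulr.
- change (n * n.+1 * n.+2 %/ gcdn 2 n %| S3 n).
  have E := XU n.
  case ho: (odd n).
    have -> : gcdn 2 n = 1 by apply/eqP; rewrite -/(coprime 2 n) coprime2n.
    rewrite divn1.
    move/dvdnP: (@X4 n ho) => [x hx].
    rewrite hx in E.
    have -> : S3 n = n * n.+1 * n.+2 * x.
      apply/eqP; rewrite -(@eqn_pmul2l 4) // E; apply/eqP; ring.
    by rewrite dvdn_mulr.
  have h2n : 2 %| n by rewrite dvdn2 ho.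
  have -> : gcdn 2 n = 2 by apply/gcdn_idPl.
  move/dvdnP: (@Xeven n hn) => [x hx].
  move/dvdnP: h2n => [a ha].
  rewrite hx ha in E *.
  have -> : a * 2 * (a * 2).+1 * (a * 2).+2 %/ 2 = a * (a * 2).+1 * (a * 2).+2.
    have -> : a * 2 * (a * 2).+1 * (a * 2).+2 = a * (a * 2).+1 * (a * 2).+2 * 2 by ring.
    by rewrite mulnK.
  have -> : S3 (a * 2) = a * (a * 2).+1 * (a * 2).+2 * x.
    apply/eqP; rewrite -(@eqn_pmul2l 4) // E; apply/eqP; ring.
  by rewrite dvdn_mulr.
- rewrite -/(S4 n).
  have h := S4_closed n.
  have -> : (S4 n = (n%:R * n.+1%:R * n.+2%:R * ((S n)%:R * (S n.+1)%:R)) / 3 :> rat)%R.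
    by rewrite -h; field.
  rewrite !natrM.
  field.
  by repeat (apply/andP; split); apply: lt0r_neq0; lra.
- case ho: (odd n).
    by apply: dvdn_mull; apply: S3div; rewrite /= ho.
  by apply: dvdn_mulr; apply: S3div; rewrite ho.
Qed.
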